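(* Let $s\ge2$ and $1=a_1\le a_2\le\dots\le a_s$ with at least one of $a_2,\dots,a_s$ greater than $1$. Define $c_i=1-a_i^{-1}$ for $2\le i\le s$, $M_j=\tfrac12(c_2^j+\dots+c_s^j)$ for $j\ge1$, $$p_0=\prod_{i=2}^s a_i^{-1/2},\qquad p_j=\frac1j\sum_{i=0}^{j-1}M_{j-i}\,p_i\ \ (j\ge1),$$ and $W_i=\sum_{j=0}^i p_j$ for $i\ge0$. Then the sequence $\{W_i\}$ is log-concave: $W_i^2\ge W_{i-1}W_{i+1}$ for all $i\ge1$.
   Context: The $p_j$ are the mixture weights in the expansion $H(u)=\sum_{j\ge0}p_jG_{s+2j}(u)$ of the cdf of $\sum_{i=1}^s a_iY^{(i)}$ ($Y^{(i)}$ independent $\chi^2_1$) in terms of chi-square cdfs $G_{s+2j}$. *)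

(* Defs.v *)
From Stdlib Require Import Reals Lra Lia List.
Open Scope R_scope.

Fixpoint sum_range (f : nat -> R) (m k : nat) : R :=
  (* sum of f m, f (m+1), ..., f (m+k-1) : k terms *)
  match k with
  | O => 0
  | S k' => f m + sum_range f (S m) k'
  end.

Definition cc (a : nat -> R) (i : nat) : R := 1 - / a i.

Definition MM (s : nat) (a : nat -> R) (j : nat) : R :=
  / 2 * sum_range (fun i => (cc a i) ^ j) 2 (s - 1).

Fixpoint prod_range (f : nat -> R) (m k : nat) : R :=
  match k with
  | O => 1
  | S k' => f m * prod_range f (S m) k'
  end.

Definition p0 (s : nat) (a : nat -> R) : R :=
  prod_range (fun i => Rpower (a i) (- (1/2))) 2 (s - 1).

(* list [p_0; ...; p_n] built by the recursion
   p_j = (1/j) sum_{i=0}^{j-1} M_{j-i} p_i *)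
Fixpoint plist (s : nat) (a : nat -> R) (n : nat) : list R :=
  match n with
  | O => p0 s a :: nil
  | S n' =>
      let l := plist s a n' in
      let j := S n' in
      l ++ (/ INR j * sum_range (fun i => MM s a (j - i)%nat * nth i l 0) 0 j) :: nil
  end.

Definition pp (s : nat) (a : nat -> R) (j : nat) : R := nth j (plist s a j) 0.

Definition WW (s : nat) (a : nat -> R) (i : nat) : R :=
  sum_range (pp s a) 0 (S i).

(* Main.v *)
Require Import Defs.
From Stdlib Require Import Reals Lra Lia Psatz List.
Open Scope R_scope.

Fixpoint sm (f : nat -> R) (n : nat) : R :=
  match n with O => 0 | S n' => sm f n' + f n' end.

Lemma sm_S f n : sm f (S n) = sm f n + f n.
Proof. reflexivity. Qed.

Lemma sm_0 f : sm f 0 = 0.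
Proof. reflexivity. Qed.

Lemma sm_ext f h n : (forall k, (k < n)%nat -> f k = h k) -> sm f n = sm h n.
Proof.
  induction n; intros H; rewrite ?sm_S; auto.
  rewrite IHn by (intros; apply H; lia). rewrite (H n) by lia. auto.
Qed.

Lemma sm_plus f h n : sm (fun k => f k + h k) n = sm f n + sm h n.
Proof. induction n; rewrite ?sm_S, ?sm_0; [lra| rewrite IHn; lra]. Qed.

Lemma sm_minus f h n : sm (fun k => f k - h k) n = sm f n - sm h n.
Proof. induction n; rewrite ?sm_S, ?sm_0; [lra| rewrite IHn; lra]. Qed.

Lemma sm_scal c f n : sm (fun k => c * f k) n = c * sm f n.
Proof. induction n; rewrite ?sm_S, ?sm_0; [lra| rewrite IHn; lra]. Qed.

Lemma sm_scalr c f n : sm (fun k => f k * c) n = sm f n * c.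
Proof. induction n; rewrite ?sm_S, ?sm_0; [lra| rewrite IHn; lra]. Qed.

Lemma sm_first f n : sm f (S n) = f O + sm (fun k => f (S k)) n.
Proof. induction n; rewrite ?sm_S, ?sm_0 in *; [lra|]. rewrite IHn. lra. Qed.

Lemma sm_le f h n : (forall k, (k < n)%nat -> f k <= h k) -> sm f n <= sm h n.
Proof.
  induction n; intros H; rewrite ?sm_S, ?sm_0; [lra|].
  assert (sm f n <= sm h n) by (apply IHn; intros; apply H; lia).
  assert (f n <= h n) by (apply H; lia). lra.
Qed.

Lemma sm_nonneg f n : (forall k, (k < n)%nat -> 0 <= f k) -> 0 <= sm f n.
Proof. intros H. rewrite <- (sm_0 f). replace (sm f 0) with (sm (fun _ => 0) n).
  apply sm_le; auto. induction n; rewrite ?sm_S, ?sm_0 in *; auto. rewrite IHn; auto; lra. Qed.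

Lemma sm_const c n : sm (fun _ => c) n = INR n * c.
Proof. induction n; rewrite ?sm_S, ?sm_0; [simpl; lra|]. rewrite IHn, S_INR. lra. Qed.

Lemma sm_rev F n : sm F (S n) = sm (fun k => F (n - k)%nat) (S n).
Proof.
  revert F; induction n; intros F.
  - reflexivity.
  - rewrite sm_first, IHn. rewrite (sm_S _ (S n)).
    replace (S n - S n)%nat with 0%nat by lia.
    rewrite (sm_ext (fun k => F (S n - k)%nat) (fun k => F (S (n - k))) (S n)).
    + lra.
    + intros k Hk. f_equal. lia.
Qed.

Lemma tri_swap (F : nat -> nat -> R) n :
  sm (fun k => sm (fun i => F i k) (S k)) (S n) =
  sm (fun i => sm (fun l => F i (i + l)%nat) (S (n - i))) (S n).
Proof.
  induction n.
  - simpl. replace (0+0)%nat with 0%nat by lia. lra.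
  - rewrite sm_S, IHn.
    rewrite (sm_S (fun i => sm (fun l => F i (i + l)%nat) (S (S n - i))) (S n)).
    replace (S n - S n)%nat with 0%nat by lia.
    rewrite (sm_ext (fun i => sm (fun l => F i (i + l)%nat) (S (S n - i)))
               (fun i => sm (fun l => F i (i + l)%nat) (S (n - i)) + F i (S n)) (S n)).
    + rewrite sm_plus. rewrite (sm_S (fun i => F i (S n)) (S n)).
      simpl (sm _ 1). rewrite Nat.add_0_r. lra.
    + intros i Hi. assert (E: (S n - i = S (n - i))%nat) by lia. rewrite E.
      rewrite sm_S. f_equal. f_equal. lia.
Qed.

Definition conv (f h : nat -> R) (n : nat) : R := sm (fun k => f k * h (n - k)%nat) (S n).

Lemma conv_comm f h n : conv f h n = conv h f n.
Proof.
  unfold conv. rewrite sm_rev. apply sm_ext. intros k Hk.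
  replace (n - (n - k))%nat with k by lia. lra.
Qed.

Lemma conv_ext_l u v h n : (forall k, u k = v k) -> conv u h n = conv v h n.
Proof. intros H. unfold conv. apply sm_ext. intros. rewrite H. auto. Qed.

Lemma conv_ext_r f u v n : (forall k, u k = v k) -> conv f u n = conv f v n.
Proof. intros H. unfold conv. apply sm_ext. intros. rewrite H. auto. Qed.

Lemma conv_assoc f g h n : conv (conv f g) h n = conv f (conv g h) n.
Proof.
  unfold conv.
  rewrite (sm_ext _ (fun k => sm (fun i => f i * g (k - i)%nat * h (n - k)%nat) (S k)) (S n)).
  2:{ intros k Hk. rewrite <- sm_scalr. auto. }
  rewrite (tri_swap (fun i k => f i * g (k - i)%nat * h (n - k)%nat)).
  apply sm_ext. intros i Hi. rewrite <- sm_scal. apply sm_ext. intros l Hl.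
  replace (i + l - i)%nat with l by lia. replace (n - (i + l))%nat with (n - i - l)%nat by lia.
  lra.
Qed.

Lemma conv_plus_l A B h n : conv (fun t => A t + B t) h n = conv A h n + conv B h n.
Proof. unfold conv. rewrite <- sm_plus. apply sm_ext. intros. lra. Qed.

Definition Dd (f : nat -> R) (j : nat) : R := INR (S j) * f (S j).

Lemma leibniz f h j : Dd (conv f h) j = conv (Dd f) h j + conv f (Dd h) j.
Proof.
  unfold Dd, conv. rewrite <- sm_scal.
  rewrite (sm_ext _ (fun k => INR k * f k * h (S j - k)%nat + f k * (INR (S j - k) * h (S j - k)%nat)) (S (S j))).
  2:{ intros k Hk. rewrite minus_INR by lia.  lra. }
  rewrite sm_plus. rewrite sm_first. rewrite (sm_S _ (S j)).
  replace (S j - S j)%nat with 0%nat by lia. simpl (INR 0).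
  rewrite (sm_ext (fun k => f k * (INR (S j - k) * h (S j - k)%nat))
              (fun k => f k * (INR (S (j - k)) * h (S (j - k)))) (S j)).
  2:{ intros k Hk. replace (S j - k)%nat with (S (j - k)) by lia. auto. }
  rewrite (sm_ext (fun k => INR (S k) * f (S k) * h (S j - S k)%nat)
              (fun k => INR (S k) * f (S k) * h (j - k)%nat) (S j)).
  2:{ intros k Hk. auto. }
  lra.
Qed.

Definition Rec (A f : nat -> R) := forall j, Dd f j = conv A f j.

Lemma rec_ext A B f : Rec A f -> (forall t, A t = B t) -> Rec B f.
Proof. intros H E j. rewrite H. apply conv_ext_l. auto. Qed.

Lemma rec_conv A B f h : Rec A f -> Rec B h -> Rec (fun t => A t + B t) (conv f h).
Proof.
  intros HA HB j. rewrite leibniz.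
  rewrite (conv_ext_l (Dd f) (conv A f)) by auto.
  rewrite (conv_ext_r f (Dd h) (conv B h)) by auto.
  rewrite (conv_assoc A f h).
  rewrite <- (conv_assoc f B h).
  rewrite (conv_ext_l (conv f B) (conv B f)) by (intros; apply conv_comm).
  rewrite (conv_assoc B f h). rewrite conv_plus_l. auto.
Qed.

Lemma rec_unique A f h lam : Rec A f -> Rec A h -> f 0%nat = lam * h 0%nat ->
  forall n, f n = lam * h n.
Proof.
  intros Hf Hh H0.
  assert (forall n m, (m <= n)%nat -> f m = lam * h m).
  { induction n; intros m Hm.
    - replace m with 0%nat by lia. auto.
    - destruct (Nat.le_gt_cases m n) as [Hl|Hl]; [auto|].
      replace m with (S n) by lia.
      assert (E1 := Hf n). assert (E2 := Hh n). unfold Dd, conv in E1, E2.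
      assert (E3 : sm (fun k => A k * f (n - k)%nat) (S n) = lam * sm (fun k => A k * h (n - k)%nat) (S n)).
      { rewrite <- sm_scal. apply sm_ext. intros k Hk. rewrite IHn by lia. lra. }
      assert (HP : 0 < INR (S n)) by (apply lt_0_INR; lia).
      apply (Rmult_eq_reg_l (INR (S n))); [|lra]. rewrite E1, E3, <- E2. lra. }
  intros n. apply (H n). lia.
Qed.

Definition ee (X : nat -> R) (A B : nat) : R := X A * X B - X (A - 1)%nat * X (S B).


Lemma F1 (X : nat -> R) :
  (forall k, 0 <= X k) -> (forall k, (1 <= k)%nat -> 0 < X k) ->
  (forall k, X k * X (S (S k)) <= X (S k) ^ 2) ->
  forall d A, (1 <= A)%nat -> X (A - 1)%nat * X (S (A + d)) <= X A * X (A + d)%nat.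
Proof.
  intros Hn Hp Hl. induction d; intros A HA.
  - rewrite Nat.add_0_r. specialize (Hl (A - 1)%nat).
    replace (S (A - 1)) with A in Hl by lia. nra.
  - specialize (IHd A HA). specialize (Hl (A + d)%nat).
    replace (A + S d)%nat with (S (A + d)) by lia.
    set (u := X (A - 1)%nat) in *. set (v := X A) in *. set (p := X (A + d)%nat) in *.
    set (q := X (S (A + d))) in *. set (r := X (S (S (A + d)))) in *.
    assert (Hp0 : 0 < p) by (apply Hp; lia). assert (Hq0 : 0 < q) by (apply Hp; lia).
    assert (Hu : 0 <= u) by apply Hn.
    assert (u * r * p <= v * q * p).
    { assert (u * (p * r) <= u * q ^ 2) by (apply Rmult_le_compat_l; lra).
      assert (u * q * q <= v * p * q) by (apply Rmult_le_compat_r; lra). nra. }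
    apply (Rmult_le_reg_r p); lra.
Qed.

Lemma F1' X :
  (forall k, 0 <= X k) -> (forall k, (1 <= k)%nat -> 0 < X k) ->
  (forall k, X k * X (S (S k)) <= X (S k) ^ 2) ->
  forall A B, (1 <= A)%nat -> (A <= B)%nat -> 0 <= ee X A B.
Proof.
  intros Hn Hp Hl A B HA HB. unfold ee.
  pose proof (F1 X Hn Hp Hl (B - A) A HA). replace (A + (B - A))%nat with B in H by lia. lra.
Qed.

Lemma F2 X :
  (forall k, 0 <= X k) -> (forall k, (1 <= k)%nat -> 0 < X k) ->
  (forall k, X k <= X (S k)) ->
  (forall k, X k * X (S (S k)) <= X (S k) ^ 2) ->
  forall A B, (1 <= A)%nat -> (A <= B)%nat -> ee X A B <= ee X A (S B).
Proof.
  intros Hn Hp Hm Hl A B HA HB. unfold ee.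
  pose proof (F1 X Hn Hp Hl (B - A) A HA) as H1. replace (A + (B - A))%nat with B in H1 by lia.
  specialize (Hl B).
  set (u := X (A - 1)%nat) in *. set (v := X A) in *. set (p := X B) in *.
  set (q := X (S B)) in *. set (r := X (S (S B))) in *.
  assert (Hp0 : 0 < p) by (apply Hp; lia). assert (Hq0 : 0 < q) by (apply Hp; lia).
  assert (Hu : 0 <= u) by apply Hn. assert (Hqp : p <= q) by apply Hm.
  assert (u * (r - q) * (p * q) <= v * (q - p) * (p * q)).
  { assert (u * q * (p * r - p * q) <= u * q * (q * q - p * q)).
    { apply Rmult_le_compat_l. nra. nra. }
    assert (u * q * (q * (q - p)) <= v * p * (q * (q - p))).
    { apply Rmult_le_compat_r. nra. lra. }
    nra. }
  assert (u * (r - q) <= v * (q - p)).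
  { apply (Rmult_le_reg_r (p * q)). nra. lra. }
  lra.
Qed.

Lemma conv_mono g x : (forall k, 0 <= g k) -> (forall k, 0 <= x k) -> (forall k, x k <= x (S k)) ->
  forall m, conv g x m <= conv g x (S m).
Proof.
  intros Hg Hx Hm m. unfold conv. rewrite (sm_S _ (S m)).
  assert (0 <= g (S m) * x (S m - S m)%nat) by (apply Rmult_le_pos; auto).
  assert (sm (fun k => g k * x (m - k)%nat) (S m) <= sm (fun k => g k * x (S m - k)%nat) (S m)).
  { apply sm_le. intros k Hk. apply Rmult_le_compat_l; auto.
    replace (S m - k)%nat with (S (m - k)) by lia. auto. }
  lra.
Qed.

Lemma conv_nonneg g x : (forall k, 0 <= g k) -> (forall k, 0 <= x k) -> forall m, 0 <= conv g x m.
Proof. intros. unfold conv. apply sm_nonneg. intros. apply Rmult_le_pos; auto. Qed.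

Definition YT g X J m := sm (fun j => g j * X (m - j)%nat) (S J).
Definition UU g X M J := sm (fun i => g i * ee X (S M - J)%nat (S M - i)%nat) (S J).
Definition VV g X M J := sm (fun i => g i * ee X (S M - J)%nat (M - i)%nat) J.
Definition DD g X M J := YT g X J (S M) ^ 2 - YT g X J M * YT g X J (S (S M)).

Lemma YT_S g X J m : YT g X (S J) m = YT g X J m + g (S J) * X (m - S J)%nat.
Proof. reflexivity. Qed.

Lemma C1 g X M J : (S J <= M)%nat ->
  DD g X M (S J) = DD g X M J + g (S J) * (UU g X M (S J) - VV g X M J).
Proof.
  intros HJ. set (A := (M - J)%nat).
  assert (E1 : (S M - S J)%nat = A) by (unfold A; lia).
  assert (E2 : (M - S J)%nat = (A - 1)%nat) by (unfold A; lia).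
  assert (E3 : (S (S M) - S J)%nat = S A) by (unfold A; lia).
  assert (E4 : (S M - J)%nat = S A) by (unfold A; lia).
  assert (K1 : VV g X M J = sm (fun i => g i * ee X (S A) (M - i)%nat) (S J)).
  { unfold VV. rewrite E4. rewrite sm_S. replace (M - J)%nat with A by (unfold A; lia).
    unfold ee. replace (S A - 1)%nat with A by lia. ring. }
  assert (K : 2 * X A * YT g X J (S M) - X (A - 1)%nat * YT g X J (S (S M)) - X (S A) * YT g X J M
              = sm (fun i => g i * ee X A (S M - i)%nat) (S J) - VV g X M J).
  { rewrite K1. unfold YT. rewrite <- sm_minus, <- !sm_scal, <- !sm_minus.
    apply sm_ext. intros i Hi. unfold ee.
    replace (S (S M - i)) with (S (S M) - i)%nat by lia.
    replace (S (M - i)) with (S M - i)%nat by lia.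
    replace (S A - 1)%nat with A by lia. ring. }
  assert (KU : UU g X M (S J) = sm (fun i => g i * ee X A (S M - i)%nat) (S J) + g (S J) * ee X A A).
  { unfold UU. rewrite E1, sm_S, E1. reflexivity. }
  unfold DD. rewrite !YT_S. rewrite E1, E2, E3, KU.
  assert (VE : VV g X M J = sm (fun i => g i * ee X A (S M - i)%nat) (S J) -
     (2 * X A * YT g X J (S M) - X (A - 1)%nat * YT g X J (S (S M)) - X (S A) * YT g X J M)) by lra.
  rewrite VE. unfold ee. ring.
Qed.


Lemma C2 g X M J :
  (forall k, 0 <= X k) -> (forall k, (1 <= k)%nat -> 0 < X k) ->
  (forall k, X k <= X (S k)) ->
  (forall k, X k * X (S (S k)) <= X (S k) ^ 2) ->
  (forall k, 0 <= g k) -> (forall k, g (S k) <= g k) ->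
  (J <= M)%nat -> g (S J) * VV g X M J <= g J * UU g X M J.
Proof.
  intros Hn Hp Hm Hl Hg Hgd HJ.
  assert (V1 : VV g X M J <= sm (fun i => g i * ee X (S M - J) (S M - i)) J).
  { unfold VV. apply sm_le. intros i Hi. apply Rmult_le_compat_l; auto.
    replace (S M - i)%nat with (S (M - i)) by lia. apply F2; auto; lia. }
  assert (V0 : 0 <= VV g X M J).
  { unfold VV. apply sm_nonneg. intros i Hi. apply Rmult_le_pos; auto. apply F1'; auto; lia. }
  assert (U1 : sm (fun i => g i * ee X (S M - J) (S M - i)) J <= UU g X M J).
  { unfold UU. rewrite sm_S. assert (0 <= g J * ee X (S M - J) (S M - J)).
    { apply Rmult_le_pos; auto. apply F1'; auto; lia. } lra. }
  assert (G1 := Hgd J). assert (G0 := Hg (S J)). assert (G2 := Hg J).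
  assert (g (S J) * VV g X M J <= g J * VV g X M J) by (apply Rmult_le_compat_r; auto).
  assert (g J * VV g X M J <= g J * UU g X M J) by (apply Rmult_le_compat_l; lra).
  lra.
Qed.

Lemma C3 g X M :
  (forall k, 0 <= X k) -> (forall k, (1 <= k)%nat -> 0 < X k) ->
  (forall k, X k <= X (S k)) ->
  (forall k, X k * X (S (S k)) <= X (S k) ^ 2) ->
  (forall k, 0 <= g k) -> (forall k, g (S k) <= g k) ->
  forall J, (J <= M)%nat -> g J * UU g X M J <= DD g X M J.
Proof.
  intros Hn Hp Hm Hl Hg Hgd. induction J; intros HJ.
  - unfold UU, DD, YT, ee. simpl sm. replace (S M - 0)%nat with (S M) by lia.
    replace (M - 0)%nat with M by lia. replace (S (S M) - 0)%nat with (S (S M)) by lia.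
    replace (S M - 1)%nat with M by lia. nra.
  - rewrite C1 by lia. specialize (IHJ ltac:(lia)).
    pose proof (C2 g X M J Hn Hp Hm Hl Hg Hgd ltac:(lia)). lra.
Qed.

Lemma lemmaA' g X M :
  X 0%nat = 0 ->
  (forall k, 0 <= X k) -> (forall k, (1 <= k)%nat -> 0 < X k) ->
  (forall k, X k <= X (S k)) ->
  (forall k, X k * X (S (S k)) <= X (S k) ^ 2) ->
  (forall k, 0 <= g k) -> (forall k, g (S k) <= g k) ->
  conv g X M * conv g X (S (S M)) <= conv g X (S M) ^ 2.
Proof.
  intros H0 Hn Hp Hm Hl Hg Hgd.
  pose proof (C3 g X M Hn Hp Hm Hl Hg Hgd M (le_n M)) as H3.
  assert (Y1 : conv g X M = YT g X M M) by reflexivity.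
  assert (Y2 : conv g X (S M) = YT g X M (S M)).
  { unfold conv, YT. rewrite sm_S. replace (S M - S M)%nat with 0%nat by lia. rewrite H0. ring. }
  assert (Y3 : conv g X (S (S M)) = YT g X M (S (S M)) + g (S M) * X 1%nat).
  { unfold conv, YT. rewrite !sm_S. replace (S (S M) - S (S M))%nat with 0%nat by lia.
    replace (S (S M) - S M)%nat with 1%nat by lia. rewrite H0. ring. }
  assert (UE : UU g X M M = X 1%nat * YT g X M (S M)).
  { unfold UU, YT. rewrite <- sm_scal. apply sm_ext. intros i Hi.
    replace (S M - M)%nat with 1%nat by lia. unfold ee. simpl (1 - 1)%nat. rewrite H0. ring. }
  unfold DD in H3. rewrite UE in H3. rewrite Y1, Y2, Y3.
  assert (Mo : conv g X M <= conv g X (S M)) by (apply conv_mono; auto).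
  assert (No : 0 <= conv g X M) by (apply conv_nonneg; auto).
  rewrite Y1, Y2 in Mo. rewrite Y1 in No.
  assert (G1 := Hgd M). assert (G0 := Hg (S M)). assert (X1 := Hn 1%nat).
  assert (g (S M) * YT g X M M <= g M * YT g X M (S M)).
  { apply Rmult_le_compat; auto. }
  assert (X 1%nat * (g (S M) * YT g X M M) <= X 1%nat * (g M * YT g X M (S M))) by
    (apply Rmult_le_compat_l; auto).
  nra.
Qed.

Definition LCC (x : nat -> R) := 0 < x 0%nat /\ (forall k, x k <= x (S k)) /\
  (forall k, x k * x (S (S k)) <= x (S k) ^ 2).

Definition XS (x : nat -> R) (k : nat) : R := match k with O => 0 | S k' => x k' end.

Lemma conv_XS g x m : conv g (XS x) (S m) = conv g x m.
Proof.
  unfold conv. rewrite sm_S. replace (S m - S m)%nat with 0%nat by lia. simpl (XS x 0).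
  rewrite Rmult_0_r, Rplus_0_r. apply sm_ext. intros k Hk.
  replace (S m - k)%nat with (S (m - k)) by lia. reflexivity.
Qed.

Lemma lemmaA g x : LCC x -> (forall k, 0 <= g k) -> (forall k, g (S k) <= g k) -> 0 < g 0%nat ->
  LCC (conv g x).
Proof.
  intros [H0 [Hm Hl]] Hg Hgd Hg0.
  assert (Hpos : forall k, 0 < x k).
  { induction k; auto. specialize (Hm k). lra. }
  split; [|split].
  - unfold conv. simpl. nra.
  - apply conv_mono; auto. intros; apply Rlt_le; auto.
  - intros k. rewrite <- (conv_XS g x k), <- (conv_XS g x (S k)), <- (conv_XS g x (S (S k))). apply lemmaA'; auto.
    + intros [|k']; simpl; [lra|]. apply Rlt_le; auto.
    + intros [|k'] Hk; [lia|]. simpl; auto.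
    + intros [|k']; simpl; [apply Rlt_le; auto| auto].
    + intros [|k']; simpl; [nra| auto].
Qed.

Fixpoint gc (c : R) (k : nat) : R :=
  match k with O => 1 | S k' => gc c k' * (c * (2 * INR k' + 1) / (2 * INR k' + 2)) end.

Lemma rec_gc c : Rec (fun t => c ^ (S t) / 2) (gc c).
Proof.
  intros j. unfold Dd, conv. induction j.
  - simpl. field.
  - rewrite sm_first. rewrite (sm_ext (fun k => c ^ S (S k) / 2 * gc c (S j - S k)%nat)
       (fun k => c * (c ^ S k / 2 * gc c (j - k)%nat)) (S j)).
    2:{ intros k Hk. change (S j - S k)%nat with (j - k)%nat. rewrite <- tech_pow_Rmult. field. }
    rewrite sm_scal, <- IHj. replace (S j - 0)%nat with (S j) by lia.
    change (gc c (S (S j))) with (gc c (S j) * (c * (2 * INR (S j) + 1) / (2 * INR (S j) + 2))).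
    rewrite (S_INR (S j)). simpl pow.
    assert (0 <= INR (S j)) by apply pos_INR. field. lra.
Qed.

Lemma gc_props c : 0 <= c <= 1 ->
  gc c 0%nat = 1 /\ (forall k, 0 <= gc c k) /\ (forall k, gc c (S k) <= gc c k).
Proof.
  intros Hc.
  assert (F : forall k, 0 <= c * (2 * INR k + 1) / (2 * INR k + 2) <= 1).
  { intros k. assert (0 <= INR k) by apply pos_INR. split.
    - apply Rmult_le_pos; [apply Rmult_le_pos; lra|]. apply Rlt_le, Rinv_0_lt_compat. lra.
    - apply (Rmult_le_reg_r (2 * INR k + 2)); [lra|]. unfold Rdiv.
      rewrite Rmult_assoc, Rinv_l by lra. nra. }
  assert (P : forall k, 0 <= gc c k).
  { induction k; simpl; [lra|]. specialize (F k). apply Rmult_le_pos; lra. }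
  split; [reflexivity| split; auto].
  intros k. simpl. specialize (F k). specialize (P k). nra.
Qed.

Definition one (k : nat) : R := 1.

Lemma rec_one : Rec (fun _ => 1) one.
Proof. intros j. unfold Dd, conv, one. rewrite sm_const. ring. Qed.

Lemma one_LCC : LCC one.
Proof. unfold LCC, one. repeat split; intros; lra. Qed.

Lemma sum_range_sm f m k : sum_range f m k = sm (fun i => f (m + i)%nat) k.
Proof.
  revert m; induction k; intros m; [reflexivity|].
  simpl sum_range. rewrite IHk, sm_first. rewrite Nat.add_0_r. f_equal.
  apply sm_ext. intros. f_equal. lia.
Qed.

Lemma sum_range_last f m k : sum_range f m (S k) = sum_range f m k + f (m + k)%nat.
Proof. rewrite !sum_range_sm. reflexivity. Qed.

Lemma plist_len s a n : length (plist s a n) = S n.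
Proof. induction n; [reflexivity|]. cbn [plist]. rewrite length_app, IHn. simpl. lia. Qed.

Lemma plist_nth s a : forall m i, (i <= m)%nat -> nth i (plist s a m) 0 = pp s a i.
Proof.
  induction m; intros i Hi.
  - replace i with 0%nat by lia. reflexivity.
  - destruct (Nat.le_gt_cases i m) as [H|H].
    + cbn [plist]. rewrite app_nth1 by (rewrite plist_len; lia). auto.
    + replace i with (S m) by lia. reflexivity.
Qed.

Lemma pp_S s a n : pp s a (S n) =
  / INR (S n) * sum_range (fun i => MM s a (S n - i)%nat * nth i (plist s a n) 0) 0 (S n).
Proof.
  unfold pp at 1. cbn [plist]. rewrite app_nth2 by (rewrite plist_len; lia).
  rewrite plist_len. rewrite Nat.sub_diag. reflexivity.
Qed.

Lemma rec_pp s a : Rec (fun t => MM s a (S t)) (pp s a).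
Proof.
  intros j. unfold Dd, conv. rewrite pp_S, sum_range_sm.
  assert (HP : 0 < INR (S j)) by (apply lt_0_INR; lia).
  rewrite <- Rmult_assoc, Rinv_r, Rmult_1_l by lra.
  rewrite sm_rev. apply sm_ext. intros k Hk. simpl (0 + (j - k))%nat.
  rewrite plist_nth by lia. f_equal. f_equal. lia.
Qed.

Fixpoint Xs (a : nat -> R) (k : nat) : nat -> R :=
  match k with O => one | S k' => conv (gc (cc a (2 + k'))) (Xs a k') end.

Definition Nc (a : nat -> R) k t := 1 + / 2 * sum_range (fun i => cc a i ^ (S t)) 2 k.

Lemma rec_Xs a k : Rec (Nc a k) (Xs a k).
Proof.
  induction k.
  - apply (rec_ext _ _ _ rec_one). intros t. unfold Nc. simpl. lra.
  - simpl Xs. eapply rec_ext. apply rec_conv. apply rec_gc. apply IHk.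
    intros t. unfold Nc. rewrite sum_range_last. cbv beta. replace (2 + k)%nat with (S (S k)) by lia. lra.
Qed.

Lemma Xs0 a k : Xs a k 0%nat = 1.
Proof. induction k; [reflexivity|]. simpl Xs. unfold conv. simpl. rewrite IHk. lra. Qed.

Theorem lemma3 (s : nat) (a : nat -> R) :
  (2 <= s)%nat ->
  a 1%nat = 1 ->
  (forall i, (1 <= i)%nat -> (i < s)%nat -> a i <= a (S i)) ->
  (exists i, (2 <= i <= s)%nat /\ 1 < a i) ->
  forall i, (1 <= i)%nat ->
    WW s a i ^ 2 >= WW s a (i - 1) * WW s a (i + 1).
Proof.
  intros Hs Ha1 Hmon _ i Hi.
  assert (Age : forall k, (1 + k <= s)%nat -> 1 <= a (1 + k)%nat).
  { induction k; intros Hk; [simpl; lra|].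
    replace (1 + S k)%nat with (S (1 + k)) by lia.
    assert (a (1 + k)%nat <= a (S (1 + k))) by (apply Hmon; lia).
    specialize (IHk ltac:(lia)). lra. }
  assert (Cc : forall k, (2 + k <= s)%nat -> 0 <= cc a (2 + k) <= 1).
  { intros k Hk. specialize (Age (S k) ltac:(lia)). replace (1 + S k)%nat with (2 + k)%nat in Age by lia.
    unfold cc. assert (0 < / a (2 + k)%nat) by (apply Rinv_0_lt_compat; lra).
    assert (/ a (2 + k)%nat <= 1).
    { rewrite <- Rinv_1. apply Rinv_le_contravar; lra. }
    lra. }
  assert (LX : forall k, (k <= s - 1)%nat -> LCC (Xs a k)).
  { induction k; intros Hk; [apply one_LCC|].
    simpl Xs. destruct (gc_props (cc a (S (S k))) (Cc k ltac:(lia))) as [G0 [G1 G2]].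
    apply lemmaA; [apply IHk; lia| exact G1 | exact G2 | simpl; lra]. }
  assert (RW : Rec (fun t => MM s a (S t) + 1) (conv (pp s a) one)).
  { apply rec_conv. apply rec_pp. apply rec_one. }
  assert (RX : Rec (fun t => MM s a (S t) + 1) (Xs a (s - 1))).
  { eapply rec_ext. apply rec_Xs. intros t. unfold Nc, MM. lra. }
  assert (U := rec_unique _ _ _ (p0 s a) RW RX).
  assert (WE : forall n, WW s a n = p0 s a * Xs a (s - 1) n).
  { intros n. rewrite <- U.
    - unfold WW, conv, one. rewrite sum_range_sm. apply sm_ext. intros. simpl. lra.
    - rewrite Xs0. unfold conv, one. simpl. unfold pp. simpl. lra. }
  destruct i as [|i']; [lia|].
  replace (S i' - 1)%nat with i' by lia. replace (S i' + 1)%nat with (S (S i')) by lia.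
  rewrite !WE. destruct (LX (s - 1)%nat (le_n _)) as [_ [_ L]]. specialize (L i').
  assert (0 <= p0 s a ^ 2) by nra.
  assert (p0 s a ^ 2 * (Xs a (s - 1) i' * Xs a (s - 1) (S (S i'))) <= p0 s a ^ 2 * Xs a (s - 1) (S i') ^ 2)
    by (apply Rmult_le_compat_l; auto).
  apply Rle_ge. nra.
Qed.
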